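(* Let $a_1,\ldots,a_n$ be relatively prime positive integers, $\mathcal{S}=\langle a_1,\ldots,a_n\rangle$, and let $e$ be a positive integer with $\gcd(e,a_1)=1$; put $\mathcal{S}^e=\langle a_1,ea_2,\ldots,ea_n\rangle$. Then $\Delta(\mathcal{S}^e)=e\,\Delta(\mathcal{S})$. Consequently, if $\mathcal{S}^e$ is pseudo-symmetric then $e=1$.
   Context: For a numerical semigroup $\mathcal{S}$ (a submonoid of $\mathbb{Z}_{\ge 0}$ with finite complement), the Frobenius number $g(\mathcal{S})$ is the largest integer not in $\mathcal{S}$, the genus $N(\mathcal{S})$ is the number of non-negative integers not in $\mathcal{S}$, and $\Delta(\mathcal{S})=2N(\mathcal{S})-1-g(\mathcal{S})$. $\mathcal{S}$ is pseudo-symmetric if $g(\mathcal{S})$ is even and $\mathcal{S}\cup(g(\mathcal{S})-\mathcal{S})=\mathbb{Z}\setminus\{g(\mathcal{S})/2\}$, where $g-\mathcal{S}=\{g-s: s\in\mathcal{S}\}$; it is known that this is equivalent to $\Delta(\mathcal{S})=1$. $\langle b_1,\ldots,b_t\rangle$ denotes the set of non-negative integer linear combinations of $b_1,\ldots,b_t$. *)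

(* Defs.v *)
From mathcomp Require Import all_boot all_order all_algebra.
Set Implicit Arguments. Unset Strict Implicit. Unset Printing Implicit Defensive.
Import Order.TTheory GRing.Theory Num.Theory.

(* inS gens x : x is a non-negative integer linear combination of the
   generators in gens, i.e. x \in < gens >.  (The coefficient k of the head
   generator g ranges over 0..x, which is no restriction when g > 0, and
   also covers g = 0.) *)
Fixpoint inS (gens : seq nat) (x : nat) : bool :=
  match gens with
  | [::] => x == 0
  | g :: gs => [exists k : 'I_x.+1, (k * g <= x) && inS gs (x - k * g)]
  end.

Definition inSZ (gens : seq nat) (z : int) : bool :=
  (0 <= z)%R && inS gens `|z|%N.

(* g is the Frobenius number of < gens >: the largest integer not in it
   (equal to -1 when every integer >= 0 belongs to it). *)
Definition is_frobenius (gens : seq nat) (g : int) : Prop :=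
  (-1 <= g)%R /\ ~~ inSZ gens g /\ (forall x : nat, (g < x%:Z)%R -> inS gens x).

Definition is_genus (gens : seq nat) (N : nat) : Prop :=
  exists B : nat, (forall x : nat, B <= x -> inS gens x) /\
                  N = count (fun x => ~~ inS gens x) (iota 0 B).

Definition Delta (g : int) (N : nat) : int := (2 * N%:Z - 1 - g)%R.

Definition pseudo_symmetric (gens : seq nat) : Prop :=
  exists h : int, is_frobenius gens (2 * h)%R /\
    forall z : int,
      (inSZ gens z \/ exists s : int, inSZ gens s /\ z = (2 * h - s)%R) <-> z <> h.

Definition Se (e a1 : nat) (as_ : seq nat) : seq nat := a1 :: map (fun a => e * a) as_.

(* Main.v *)
Require Import Defs.
From mathcomp Require Import all_boot all_order all_algebra zify.
Set Implicit Arguments. Unset Strict Implicit. Unset Printing Implicit Defensive.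
Import Order.TTheory GRing.Theory Num.Theory.
Import Order.TTheory GRing.Theory Num.Theory.

Lemma inS_cons g gs x : inS (g :: gs) x <-> exists k, k * g <= x /\ inS gs (x - k * g).
Proof.
split => /=.
  by case/existsP => k /andP[h1 h2]; exists k.
case=> k [h1 h2]; case: (posnP g) => [g0|gp].
  subst g; apply/existsP; exists (Ordinal (ltn0Sn x)) => /=.
  by rewrite muln0 in h2 *; rewrite h2.
have hk : k < x.+1 by rewrite ltnS; apply: leq_trans h1; rewrite leq_pmulr.
by apply/existsP; exists (Ordinal hk); rewrite /= h1 h2.
Qed.

Lemma inS0 gs : inS gs 0.
Proof. elim: gs => [//|g gs IH]; apply/inS_cons; exists 0; by rewrite mul0n. Qed.

Lemma inS_add gs x y : inS gs x -> inS gs y -> inS gs (x + y).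
Proof.
elim: gs x y => [x y /eqP-> /eqP-> //|g gs IH x y].
move=> /inS_cons [k1 [h1 h2]] /inS_cons [k2 [h3 h4]].
apply/inS_cons; exists (k1 + k2); split; first by rewrite mulnDl leq_add.
have -> : x + y - (k1 + k2) * g = (x - k1 * g) + (y - k2 * g) by rewrite mulnDl; lia.
exact: IH.
Qed.

Lemma inS_map e gs x : 0 < e ->
  inS (map (fun a => e * a) gs) x <-> exists y, x = e * y /\ inS gs y.
Proof.
move=> he; elim: gs x => [|g gs IH] x /=.
  split; first by move/eqP->; exists 0; rewrite muln0.
  by case=> y [-> /eqP->]; rewrite muln0.
have -> : [exists k : 'I_x.+1, (k * (e * g) <= x) && inS [seq e * a | a <- gs] (x - k * (e * g))]
   = inS (e * g :: [seq e * a | a <- gs]) x by [].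
rewrite inS_cons; split.
  case=> k [h1 /IH [y [hy hin]]].
  exists (y + k * g); split; first by rewrite mulnDr; lia.
  apply/inS_cons; exists k; split; first lia.
  by rewrite addnK.
case=> y [-> /inS_cons [k [h1 h2]]].
exists k; split; first by rewrite mulnCA leq_mul2l h1 orbT.
apply/IH; exists (y - k * g); split => //; rewrite mulnBr; lia.
Qed.

Lemma inSe e a1 as_ x : 0 < e ->
  inS (Se e a1 as_) x <-> exists k y, x = k * a1 + e * y /\ inS as_ y.
Proof.
move=> he; rewrite /Se inS_cons; split.
  case=> k [h1 /(inS_map _ _ he) [y [hy hin]]]; exists k, y; split => //; lia.
case=> k [y [-> hin]]; exists k; split; first lia.
apply/(inS_map _ _ he); exists y; split => //; lia.
Qed.

Lemma inS1 a1 as_ q :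
  inS (a1 :: as_) q <-> exists k t, q = k * a1 + t /\ inS as_ t.
Proof.
rewrite inS_cons; split.
  case=> k [h1 h2]; exists k, (q - k * a1); split => //; lia.
case=> k [t [-> h]]; exists k; split; first lia.
by rewrite addKn.
Qed.

Lemma mod_cancel e a r k : coprime e a -> a * r = a * k %[mod e] -> r = k %[mod e].
Proof.
move=> hc; wlog hrk : r k / r <= k.
  move=> W h; case: (leqP r k) => H; first exact: W.
  by symmetry; apply: W; [exact: ltnW|symmetry].
move/eqP; rewrite eq_sym eqn_mod_dvd; last by rewrite leq_mul2l hrk orbT.
rewrite -mulnBr (Gauss_dvdr _ hc) -eqn_mod_dvd // => /eqP ->. done.
Qed.

Section K.
Variables (a1 e : nat) (as_ : seq nat).
Hypotheses (he : 0 < e) (hcop : coprime e a1).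

Lemma K1 r q : r < e -> inS (Se e a1 as_) (a1 * r + e * q) = inS (a1 :: as_) q.
Proof.
move=> hr; apply/idP/idP.
  move/(inSe _ _ _ he) => [k [y [hxy hin]]].
  have hm : a1 * r = a1 * k %[mod e].
    have := congr1 (modn^~ e) hxy => /=.
    by rewrite (mulnC e q) (mulnC e y) !(addnC _ (_ * e)) !modnMDl (mulnC k).
  have hrk := mod_cancel hcop hm; rewrite modn_small // in hrk.
  have hk := divn_eq k e; rewrite -hrk in hk.
  have : e * q = e * (a1 * (k %/ e) + y) by rewrite hk in hxy; lia.
  move/eqP; rewrite eqn_pmul2l // => /eqP ->.
  apply/inS1; exists (k %/ e), y; split => //; lia.
move/inS1 => [k [t [-> hin]]].
apply/(inSe _ _ _ he); exists (r + e * k), t; split => //; lia.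
Qed.

Lemma K2 r q x : r < e -> 0 < q -> x + e * q = a1 * r -> ~~ inS (Se e a1 as_) x.
Proof.
move=> hr hq hx; apply/negP => /(inSe _ _ _ he) [k [y [hxy hin]]].
have hm : a1 * r = a1 * k %[mod e].
  rewrite -hx hxy -addnA -mulnDr (mulnC e) addnC modnMDl; by rewrite mulnC.
have hrk := mod_cancel hcop hm; rewrite modn_small // in hrk.
have hk : r <= k by rewrite hrk leq_mod.
have : a1 * r <= a1 * k by rewrite leq_mul2l hk orbT.
nia.
Qed.

Lemma mod_inj (r1 r2 : nat) : r1 < e -> r2 < e -> (a1 * r1) %% e = (a1 * r2) %% e -> r1 = r2.
Proof.
move=> h1 h2 h; have := mod_cancel hcop h; rewrite !modn_small //.
Qed.

Lemma exists_r x : exists2 r, r < e & (a1 * r) %% e = x %% e.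
Proof.
pose f (i : 'I_e) : 'I_e := Ordinal (ltn_pmod (a1 * i) he).
have finj : injective f.
  move=> i j /(congr1 val) /= h; apply: val_inj; exact: (mod_inj (ltn_ord i) (ltn_ord j) h).
have := injF_onto finj (Ordinal (ltn_pmod x he)).
case/codomP => i /(congr1 val) /= hi.
by exists i.
Qed.

End K.
Import Order.TTheory GRing.Theory Num.Theory.

Lemma inSZ_nat gens (x : nat) : inSZ gens x%:Z = inS gens x.
Proof. by rewrite /inSZ. Qed.

Lemma inSZ_neg gens (z : int) : (z < 0)%R -> inSZ gens z = false.
Proof. by rewrite /inSZ => h; rewrite leNgt h. Qed.

Section F.
Variables (a1 e : nat) (as_ : seq nat).
Hypotheses (ha : 0 < a1) (he : 0 < e) (hcop : coprime e a1).
Variable g : int.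
Hypothesis hg : is_frobenius (a1 :: as_) g.

Definition V : int := (e%:Z * g + (a1 * (e - 1))%:Z)%R.

Lemma V_above (x : nat) : (V < x%:Z)%R -> inS (Se e a1 as_) x.
Proof.
move=> hx; case: hg => [hg1 [hg2 hg3]].
case: (exists_r he hcop x) => r hr hm.
have ex := divn_eq x e; have ea := divn_eq (a1 * r) e.
have h1 : a1 * r < x + e.
  have : (a1 * r <= a1 * (e - 1)) by rewrite leq_mul2l; apply/orP; right; lia.
  have : (- (e%:Z) <= e%:Z * g)%R.
    have : (e%:Z * -1 <= e%:Z * g)%R by apply: ler_wpM2l.
    lia.
  rewrite /V in hx; lia.
have h2 : (a1 * r) %/ e <= x %/ e.
  rewrite -ltnS -(ltn_pmul2r he); rewrite hm in ea; lia.
set q := x %/ e - (a1 * r) %/ e.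
have hxq : x = a1 * r + e * q by rewrite /q mulnBr; rewrite hm in ea; nia.
rewrite hxq (K1 as_ he hcop) //.
apply: hg3.
have : (e%:Z * g < e%:Z * q%:Z)%R.
  have : (a1 * r <= a1 * (e - 1)) by rewrite leq_mul2l; apply/orP; right; lia.
  rewrite /V hxq in hx; lia.
by rewrite ltr_pM2l // ltz_nat.
Qed.

Lemma V_frob : is_frobenius (Se e a1 as_) V.
Proof.
case: hg => [hg1 [hg2 hg3]].
split; [|split; last exact: V_above].
- have : (- (e%:Z) <= e%:Z * g)%R.
    have : (e%:Z * -1 <= e%:Z * g)%R by apply: ler_wpM2l.
    lia.
  have : a1 * (e - 1) >= e - 1 by rewrite leq_pmull.
  rewrite /V; lia.
- rewrite /V; case: g hg1 hg2 hg3 => [gn|n] hg1 hg2 hg3.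
    have -> : (e%:Z * gn%:Z + (a1 * (e - 1))%:Z)%R = Posz (a1 * (e - 1) + e * gn).
      have := PoszM e gn; lia.
    rewrite inSZ_nat (K1 as_ he hcop) //; last lia.
  have hn : n = 0 by move: hg1; rewrite NegzE; lia.
  subst n; rewrite NegzE.
  case: (ltP (a1 * (e - 1)) e) => h.
    by rewrite inSZ_neg //; lia.
  have -> : (e%:Z * - (Posz 1) + (a1 * (e - 1))%:Z)%R = Posz (a1 * (e - 1) - e) by lia.
  rewrite inSZ_nat; apply: (K2 as_ he hcop (r := e - 1) (q := 1)); lia.
Qed.

End F.

Lemma count_stable (P : pred nat) B1 B :
  (forall x, B1 <= x -> P x) -> B1 <= B ->
  count (fun x => ~~ P x) (iota 0 B) = count (fun x => ~~ P x) (iota 0 B1).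
Proof.
move=> hP hB; rewrite -(subnKC hB) iotaD count_cat add0n.
rewrite [X in _ + X](@eq_in_count _ _ pred0); first by rewrite count_pred0 addn0.
move=> x; rewrite mem_iota => /andP[h1 _]; by rewrite /= hP.
Qed.

Lemma count_unique (P : pred nat) B1 B2 :
  (forall x, B1 <= x -> P x) -> (forall x, B2 <= x -> P x) ->
  count (fun x => ~~ P x) (iota 0 B1) = count (fun x => ~~ P x) (iota 0 B2).
Proof.
move=> h1 h2.
rewrite -(count_stable h1 (leq_maxl B1 B2)) -(count_stable h2 (leq_maxr B1 B2)) //.
Qed.

Lemma count_iota_sum (P : pred nat) m n :
  count P (iota m n) = \sum_(c < n) P (m + c).
Proof.
elim: n => [|n IH]; first by rewrite big_ord0.
have -> : iota m n.+1 = iota m n ++ [:: m + n] by rewrite -addn1 iotaD.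
by rewrite big_ord_recr /= -IH count_cat /= addn0.
Qed.

Lemma count_split (P : pred nat) e M :
  count P (iota 0 (e * M)) = \sum_(c < e) count (fun j => P (e * j + c)) (iota 0 M).
Proof.
elim: M => [|M IH].
  by rewrite muln0 /= big1.
rewrite mulnS addnC iotaD count_cat IH add0n.
have hM : iota 0 M.+1 = iota 0 M ++ [:: M] by rewrite -addn1 iotaD.
rewrite [in RHS](eq_bigr (fun c : 'I_e => count (fun j => P (e * j + c)) (iota 0 M)
      + P (e * M + c))); last first.
  by move=> c _; rewrite hM count_cat /= addn0.
by rewrite big_split /= count_iota_sum addnC.
Qed.

Lemma sum_ord_2 n : 2 * \sum_(i < n) i = n * (n - 1).
Proof.
elim: n => [|n IH]; first by rewrite big_ord0.
rewrite big_ord_recr /= mulnDr IH; case: n {IH} => [//|n]; rewrite !subn1 /=; nia.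
Qed.
Import Order.TTheory GRing.Theory Num.Theory.

Lemma frob_unique gens g1 g2 : is_frobenius gens g1 -> is_frobenius gens g2 -> g1 = g2.
Proof.
have H : forall h1 h2, is_frobenius gens h1 -> is_frobenius gens h2 -> (h1 <= h2)%R.
  move=> h1 h2 [a1 [a2 a3]] [b1 [b2 b3]].
  rewrite leNgt; apply/negP => hlt.
  case: h1 a1 a2 a3 hlt => [n|n] a1 a2 a3 hlt.
    by move: a2; rewrite inSZ_nat b3.
  move: hlt b1; rewrite NegzE; lia.
by move=> h1 h2; apply/eqP; rewrite eq_le !H.
Qed.

Section G.
Variables (a1 e : nat) (as_ : seq nat).
Hypotheses (ha : 0 < a1) (he : 0 < e) (hcop : coprime e a1).
Variables (B N : nat).
Hypothesis hB : forall y, B <= y -> inS (a1 :: as_) y.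
Hypothesis hN : N = count (fun x => ~~ inS (a1 :: as_) x) (iota 0 B).

Lemma residue_count r M : r < e -> B + a1 <= M ->
  count (fun j => ~~ inS (Se e a1 as_) (e * j + (a1 * r) %% e)) (iota 0 M)
  = N + (a1 * r) %/ e.
Proof.
move=> hr hM.
set D := (a1 * r) %/ e; set c := (a1 * r) %% e.
have hD : a1 * r = D * e + c by rewrite /D /c -divn_eq.
have hDa : D <= a1.
  rewrite /D -ltnS ltn_divLR //; have := leq_mul (leqnn a1) (ltnW hr); nia.
clearbody D c.
have hDM : D <= M by lia.
rewrite -(subnKC hDM) iotaD count_cat add0n.
rewrite (@eq_in_count _ _ predT); last first.
  move=> j; rewrite mem_iota add0n => /andP[_ hj] /=.
  by apply: (K2 as_ he hcop (r := r) (q := D - j)) => //; lia.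
rewrite count_predT size_iota addnC; congr addn.
rewrite -{1}(addn0 D) iotaDl count_map.
rewrite (@eq_count _ _ (fun x => ~~ inS (a1 :: as_) x)); last first.
  move=> k; rewrite /preim; cbv beta.
  change (~~ inS (Se e a1 as_) (e * (D + k) + c) = ~~ inS (a1 :: as_) k).
  have -> : e * (D + k) + c = a1 * r + e * k by lia.
  by rewrite (K1 as_ he hcop).
rewrite hN; apply: count_stable => //; lia.
Qed.

Definition fres (i : 'I_e) : 'I_e := Ordinal (ltn_pmod (a1 * i) he).

Lemma fres_inj : injective fres.
Proof.
move=> i j /(congr1 val) /= h; apply: val_inj; exact: (mod_inj hcop (ltn_ord i) (ltn_ord j) h).
Qed.

Lemma count_Se M : B + a1 <= M ->
  count (fun x => ~~ inS (Se e a1 as_) x) (iota 0 (e * M))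
  = e * N + \sum_(r < e) (a1 * r) %/ e.
Proof.
move=> hM; rewrite count_split.
rewrite (reindex_inj fres_inj) /=.
rewrite (eq_bigr (fun r : 'I_e => N + (a1 * r) %/ e)); last first.
  by move=> r _; rewrite residue_count.
by rewrite big_split /= sum_nat_const card_ord.
Qed.

Lemma sum_div2 : 2 * \sum_(r < e) (a1 * r) %/ e = (a1 - 1) * (e - 1).
Proof.
have h1 : \sum_(r < e) (a1 * r) %% e = \sum_(r < e) r.
  by rewrite [RHS](reindex_inj fres_inj).
have h2 : \sum_(r < e) (a1 * r) %/ e * e + \sum_(r < e) (a1 * r) %% e = a1 * \sum_(r < e) r.
  rewrite -big_split /= big_distrr /=; apply: eq_bigr => r _; by rewrite -divn_eq.
rewrite -big_distrl /= h1 in h2.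
have h3 := sum_ord_2 e.
apply/eqP; rewrite -(eqn_pmul2l he); apply/eqP.
set Q := \sum_(r < e) (a1 * r) %/ e in h2 *; set T := \sum_(r < e) (r : nat) in h1 h2 h3.
nia.
Qed.

End G.
Import Order.TTheory GRing.Theory Num.Theory.

Lemma frob_exists gens B : (forall x, B <= x -> inS gens x) -> exists g, is_frobenius gens g.
Proof.
elim: B => [|B IH] hB.
  exists (-1)%R; split; first by [].
  split; first by rewrite inSZ_neg. by move=> x _; apply: hB.
case hBB: (inS gens B).
  apply: IH => x; rewrite leq_eqVlt => /orP[/eqP<- //|]; exact: hB.
exists (Posz B); split; first lia.
split; first by rewrite inSZ_nat hBB.
move=> x hx; apply: hB; lia.
Qed.

Lemma part1 (a1 : nat) (as_ : seq nat) (e : nat)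
  (ha : 0 < a1) (he : 0 < e) (hcop : coprime e a1) (g ge : int) (N Ne : nat) :
      is_frobenius (a1 :: as_) g -> is_genus (a1 :: as_) N ->
      is_frobenius (Se e a1 as_) ge -> is_genus (Se e a1 as_) Ne ->
      Delta ge Ne = (e%:Z * Delta g N)%R.
Proof.
move=> hg [B [hB hN]] hge [B' [hB' hNe]].
have hV := V_frob (as_:=as_) ha he hcop hg.
have -> := frob_unique hge hV.
have hgB : (g < B%:Z)%R.
  case: hg => [h1 [h2 h3]]; rewrite ltNge; apply/negP => hle.
  case: g h1 h2 h3 hle hV => [n|n] h1 h2 h3 hle hV; last by move: hle; rewrite NegzE; lia.
  by move: h2; rewrite inSZ_nat hB //; lia.
have hbig : forall x, e * (B + a1) <= x -> inS (Se e a1 as_) x.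
  move=> x hx; apply: (V_above ha he hcop hg).
  have : (e%:Z * g < e%:Z * B%:Z)%R by rewrite ltr_pM2l // ltz_nat.
  have := PoszM e B; have : a1 * (e - 1) < e * a1 by nia.
  rewrite /V; lia.
have hNe' : Ne = e * N + \sum_(r < e) (a1 * r) %/ e.
  rewrite hNe (count_unique hB' hbig).
  exact: (count_Se ha he hcop hB hN).
have h2 := sum_div2 ha he hcop hN.
move: h2; set Q := \sum_(r < e) (a1 * r) %/ e => h2.
rewrite hNe' /Delta /V.
have := PoszM e N; have := PoszM (a1 - 1) (e - 1); have := PoszM a1 (e - 1).
have := PoszM 2 Q.
nia.
Qed.
Import Order.TTheory GRing.Theory Num.Theory.

Lemma psym_count gens (hn : nat) :
  is_frobenius gens (2 * hn%:Z)%R ->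
  (forall z : int,
      (inSZ gens z \/ exists s : int, inSZ gens s /\ z = (2 * hn%:Z - s)%R) <-> z <> Posz hn) ->
  count (fun x => ~~ inS gens x) (iota 0 (2 * hn).+1) = hn.+1.
Proof.
move=> [_ [hf2 _]] hsym.
have hf2' : ~~ inS gens (2 * hn).
  by move: hf2; have -> : (2 * hn%:Z)%R = Posz (2 * hn) by lia.
have hh : ~~ inS gens hn.
  apply/negP => hin.
  have := (proj1 (hsym (Posz hn))); apply => //; left; by rewrite inSZ_nat.
set n := (2 * hn).+1.
set P := (fun x => ~~ inS gens x).
set Q := (fun x => ~~ inS gens (2 * hn - x)).
have hPQ : count Q (iota 0 n) = count P (iota 0 n).
  rewrite !count_iota_sum [in LHS](reindex_inj rev_ord_inj) /=.
  apply: eq_bigr => i _; rewrite /Q /P !add0n; have := ltn_ord i.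
  rewrite /n => hi; congr (~~ inS gens _); lia.
have hU : count (predU P Q) (iota 0 n) = n.
  rewrite (@eq_in_count _ _ predT) ?count_predT ?size_iota //.
  move=> x; rewrite mem_iota /= /P /Q => hx.
  case: (eqVneq x hn) => [->|hne].
    have -> : 2 * hn - hn = hn by lia.
    by rewrite orbb.
  rewrite -negb_and; apply/negP => /andP[h1 h2].
  have := inS_add h1 h2; have -> : x + (2 * hn - x) = 2 * hn by rewrite /n in hx; lia.
  by rewrite (negbTE hf2').
have hI : count (predI P Q) (iota 0 n) = 1.
  rewrite (@eq_in_count _ _ (pred1 hn)).
    by rewrite count_uniq_mem ?iota_uniq // mem_iota /n; lia.
  move=> x; rewrite mem_iota /= /P /Q => hx.
  case: (eqVneq x hn) => [->|hne].
    have -> : 2 * hn - hn = hn by lia.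
    by rewrite andbb.
  apply/negbTE; rewrite -negb_or negbK.
  have hz : (Posz x <> Posz hn) by move=> [] h; move: hne; rewrite h eqxx.
  case: (proj2 (hsym (Posz x)) hz) => [hin|[s [hs hxs]]].
    by rewrite -inSZ_nat hin.
  apply/orP; right.
  move: hs; rewrite /inSZ => /andP[hs0 hs].
  case: s hs0 hs hxs => [m|m] //= _ hs hxs.
  have -> : 2 * hn - x = m by lia.
  done.
have := count_predUI P Q (iota 0 n); rewrite hU hI hPQ /n; lia.
Qed.
Import Order.TTheory GRing.Theory Num.Theory.

Theorem mainTheorem2 (a1 : nat) (as_ : seq nat) (e : nat)
  (hpos : all (fun a => 0 < a) (a1 :: as_))
  (hgcd : foldr gcdn 0 (a1 :: as_) = 1)
  (he : 0 < e) (hcop : coprime e a1) :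
  (forall (g ge : int) (N Ne : nat),
      is_frobenius (a1 :: as_) g -> is_genus (a1 :: as_) N ->
      is_frobenius (Se e a1 as_) ge -> is_genus (Se e a1 as_) Ne ->
      Delta ge Ne = (e%:Z * Delta g N)%R)
  /\ (pseudo_symmetric (Se e a1 as_) -> e = 1).
Proof.
have ha : 0 < a1 by case/andP: hpos.
split; first by move=> g ge N Ne; apply: part1.
move=> [h [hfr hsym]].
case: h hfr hsym => [hn|n] hfr hsym; last first.
  by case: hfr => h1 _; move: h1; rewrite NegzE; lia.
have hSe : forall x, (2 * hn).+1 <= x -> inS (Se e a1 as_) x.
  by move=> x hx; case: hfr => _ [_ h3]; apply: h3; lia.
have hS : forall q, (2 * hn).+1 <= q -> inS (a1 :: as_) q.
  move=> q hq; rewrite -(@K1 a1 e as_ he hcop 0 q) //.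
  rewrite muln0 add0n; apply: hSe; nia.
have [g hg] := frob_exists hS.
have hN : is_genus (a1 :: as_) (count (fun x => ~~ inS (a1 :: as_) x) (iota 0 (2 * hn).+1)).
  by exists (2 * hn).+1.
have hNe : is_genus (Se e a1 as_) (count (fun x => ~~ inS (Se e a1 as_) x) (iota 0 (2 * hn).+1)).
  by exists (2 * hn).+1.
have := part1 ha he hcop hg hN hfr hNe.
rewrite (psym_count hfr hsym) /Delta.
set d := (_ - _ - g)%R => hd.
have : (e%:Z * d = 1)%R by rewrite -hd; lia.
clearbody d; move=> h1.
case: (boolP (0 < d)%R) => hd0.
  have : (e%:Z * 1 <= e%:Z * d)%R by apply: ler_wpM2l.
  lia.
rewrite -leNgt in hd0.
have : (e%:Z * d <= e%:Z * 0)%R by apply: ler_wpM2l.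
lia.
Qed.
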